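(* Let $S^2\subset\mathbb{R}^3$ be the unit sphere with the round metric and area form, let $H:S^2\to\mathbb{R}$ be smooth and let $X_H$ be its Hamiltonian vector field. A point $s\in S^2$ is a conformal point of $X_H$ if and only if the second jet $j^2H(s)$ equals the second jet at $s$ of the restriction to $S^2$ of some affine function $d+ax+by+cz$ on $\mathbb{R}^3$ (a first spherical harmonic plus a constant).
   Context: A point $s$ is a conformal point of a vector field $X$ on the Riemannian surface $S^2$ if the linearization $\nabla X(s):T_sS^2\to T_sS^2$ (Levi-Civita covariant derivative) is an infinitesimal similarity, i.e. of the form $\lambda\,\mathrm{Id}+\mu J$ where $J$ is rotation by $90^\circ$; equivalently, the infinitesimal area-preserving map generated by $X$ has derivative at $s$ sending circles to congruent circles. *)

(* Defs.v *)
From HB Require Import structures.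
From mathcomp Require Import all_boot all_order all_algebra.
From mathcomp Require Import all_classical all_reals all_analysis.
Set Implicit Arguments. Unset Strict Implicit. Unset Printing Implicit Defensive.
Import Order.TTheory GRing.Theory Num.Theory.
Import numFieldNormedType.Exports.
Local Open Scope ring_scope.

Section S2Defs.
Variable R : realType.
Notation V := ('rV[R]_3).

Definition dot (u v : V) : R := \sum_(i < 3) u 0 i * v 0 i.
Definition cross (u v : V) : V :=
  \row_(i < 3) (u 0 (ordS i) * v 0 (ordS (ordS i))
                - u 0 (ordS (ordS i)) * v 0 (ordS i)).
Definition normalize (p : V) : V := (Num.sqrt (dot p p))^-1 *: p.

Definition on_sphere (s : V) : Prop := dot s s = 1.
Definition tangent (s v : V) : Prop := dot s v = 0.
Definition tproj (s w : V) : V := w - dot w s *: s.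
(* rotation by +90 degrees in T_s S^2 (w.r.t. the outward orientation) *)
Definition Jrot (s v : V) : V := cross s v.

Fixpoint iterD (vs : seq V) (f : V -> R) : V -> R :=
  if vs is v :: vs' then 'D_v (iterD vs' f) else f.
Definition smooth (f : V -> R) : Prop :=
  forall (vs : seq V) (x : V), differentiable (iterD vs f) x.

Definition grad (H : V -> R) (x : V) : V :=
  \row_(i < 3) 'D_(delta_mx 0 i : V) H x.

(* Hamiltonian vector field of H|S^2 w.r.t. the area form
   omega_p(u,v) = dot p (cross u v): it is the unique tangent field with
   omega_p(X_H p, v) = dH_p(v) for tangent v, namely X_H p = cross (grad H p) p.
   (The formula is used on all of R^3 as an extension of X_H off S^2.) *)
Definition hamX (H : V -> R) (x : V) : V := cross (grad H x) x.

(* Levi-Civita covariant derivative of X_H on S^2 at s in direction v *)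
Definition covD (H : V -> R) (s v : V) : V := tproj s ('D_v (hamX H) s).

Definition conformal_point (H : V -> R) (s : V) : Prop :=
  exists lambda mu : R, forall v : V, tangent s v ->
    covD H s v = lambda *: v + mu *: Jrot s v.

Definition chart (s : V) (v : V) : V := normalize (s + v).

(* equality of second jets at s of the restrictions to S^2 of F and G:
   all derivatives of order <= 2 in the chart [chart s] agree at 0 *)
Definition jet2_eq (s : V) (F G : V -> R) : Prop :=
  let F' := F \o chart s in let G' := G \o chart s in
  F' 0 = G' 0 /\
  (forall v, tangent s v -> 'D_v F' 0 = 'D_v G' 0) /\
  (forall v w, tangent s v -> tangent s w ->
     'D_v ('D_w F') 0 = 'D_v ('D_w G') 0).

Definition affine3 (a b c d : R) (p : V) : R :=
  d + a * p 0 0 + b * p 0 1 + c * p 0 2.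

End S2Defs.

(* Main.v *)
Require Import Defs.
From HB Require Import structures.
From mathcomp Require Import all_boot all_order all_algebra.
From mathcomp Require Import all_classical all_reals all_analysis.
From mathcomp Require Import ring lra.
Import Order.TTheory GRing.Theory Num.Theory.
Import numFieldNormedType.Exports.
Local Open Scope ring_scope.
Unset Printing Implicit Defensive.

Section Basics.
Context {R : realType}.
Notation V := ('rV[R]_3).
Definition ee (i : 'I_3) : V := delta_mx 0 i.

Lemma sum3 (f : 'I_3 -> R) : \sum_(i<3) f i = f 0 + f 1 + f 2.
Proof. rewrite !big_ord_recr big_ord0 /= add0r. congr (f _ + f _ + f _); exact/val_inj. Qed.
Lemma dotE (u v : V) : dot u v = u 0 0 * v 0 0 + u 0 1 * v 0 1 + u 0 2 * v 0 2.
Proof. by rewrite /dot sum3. Qed.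

Lemma oS0 : ordS (0 : 'I_3) = 1. Proof. exact/val_inj. Qed.
Lemma oS1 : ordS (1 : 'I_3) = 2. Proof. exact/val_inj. Qed.
Lemma oS2 : ordS (2 : 'I_3) = 0. Proof. exact/val_inj. Qed.

Lemma cross0 (u v : V) : cross u v 0 0 = u 0 1 * v 0 2 - u 0 2 * v 0 1.
Proof. by rewrite mxE oS0 oS1. Qed.
Lemma cross1 (u v : V) : cross u v 0 1 = u 0 2 * v 0 0 - u 0 0 * v 0 2.
Proof. by rewrite mxE oS1 oS2. Qed.
Lemma cross2 (u v : V) : cross u v 0 2 = u 0 0 * v 0 1 - u 0 1 * v 0 0.
Proof. by rewrite mxE oS2 oS0. Qed.

Lemma vec3P (u v : V) : u 0 0 = v 0 0 -> u 0 1 = v 0 1 -> u 0 2 = v 0 2 -> u = v.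
Proof.
move=> h0 h1 h2; apply/rowP => -[[|[|[|//]]] Hi].
- by have -> : Ordinal Hi = 0 by exact/val_inj.
- by have -> : Ordinal Hi = 1 by exact/val_inj.
- by have -> : Ordinal Hi = 2 by exact/val_inj.
Qed.

Lemma ord1E (i : 'I_1) : i = 0. Proof. by case: i => -[|//] ?; exact/val_inj. Qed.

Lemma eeE (i j : 'I_3) : ee i 0 j = (i == j)%:R.
Proof. by rewrite /ee mxE /= eq_sym. Qed.

Lemma decomp (u : V) : u = u 0 0 *: ee 0 + u 0 1 *: ee 1 + u 0 2 *: ee 2.
Proof. apply: vec3P; rewrite !mxE /=; ring. Qed.

Implicit Types (f g : V -> R) (x v w : V).

Lemma dfD f g x v : derivable f x v -> derivable g x v ->
  'D_v (fun y => f y + g y) x = 'D_v f x + 'D_v g x.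
Proof. exact: deriveD. Qed.
Lemma dfB f g x v : derivable f x v -> derivable g x v ->
  'D_v (fun y => f y - g y) x = 'D_v f x - 'D_v g x.
Proof. exact: deriveB. Qed.
Lemma dfM f g x v : derivable f x v -> derivable g x v ->
  'D_v (fun y => f y * g y) x = 'D_v f x * g x + f x * 'D_v g x.
Proof. move=> hf hg; rewrite (deriveM hf hg); rewrite /GRing.scale /=; ring. Qed.

Lemma dfC (k : R) x v : 'D_v (fun _ : V => k) x = 0.
Proof. exact: (derive_cst k). Qed.
Lemma dbD f g x v : derivable f x v -> derivable g x v -> derivable (fun y => f y + g y) x v.
Proof. exact: derivableD. Qed.
Lemma dbB f g x v : derivable f x v -> derivable g x v -> derivable (fun y => f y - g y) x v.
Proof. exact: derivableB. Qed.
Lemma dbM f g x v : derivable f x v -> derivable g x v -> derivable (fun y => f y * g y) x v.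
Proof. exact: derivableM. Qed.
Lemma dbC (k : R) x v : derivable (fun _ : V => k) x v.
Proof. exact: (derivable_cst k). Qed.

Lemma dcoord (i : 'I_3) x v : 'D_v (fun y : V => y 0 i) x = v 0 i.
Proof.
have := @derive_mx R V 1 3 id x v (@derivable_id _ _ x v); rewrite derive_id => /(congr1 (fun M : V => M 0 i)).
by rewrite mxE.
Qed.
Lemma bcoord (i : 'I_3) x v : derivable (fun y : V => y 0 i) x v.
Proof. exact/diff_derivable/differentiable_coord. Qed.
Lemma diffcoord (i : 'I_3) x : differentiable (fun y : V => y 0 i) x.
Proof. exact/differentiable_coord. Qed.

Lemma Dlin f x v : differentiable f x ->
  'D_v f x = v 0 0 * 'D_(ee 0) f x + v 0 1 * 'D_(ee 1) f x + v 0 2 * 'D_(ee 2) f x.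
Proof.
move=> df; rewrite !deriveE // {1}(decomp v) !linearD !linearZ /=.
by rewrite /GRing.scale.
Qed.

Lemma Dadd f x v w : differentiable f x -> 'D_(v + w) f x = 'D_v f x + 'D_w f x.
Proof. by move=> df; rewrite !deriveE // linearD. Qed.
End Basics.
Arguments dfD {R} [f g x v].
Arguments dfB {R} [f g x v].
Arguments dfM {R} [f g x v].
Arguments dbD {R} [f g x v].
Arguments dbB {R} [f g x v].
Arguments dbM {R} [f g x v].


Section Chain.
Context {R : realType}.
Lemma chainD (U V W : normedModType R) (c : U -> V) (G : V -> W) u w :
  differentiable c u -> differentiable G (c u) ->
  'D_w (G \o c) u = 'D_('D_w c u) G (c u).
Proof.
move=> dc dG; rewrite deriveE; last exact: differentiable_comp.
by rewrite diff_comp // (deriveE w dc) (deriveE _ dG).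
Qed.
Lemma chainB (U V W : normedModType R) (c : U -> V) (G : V -> W) u w :
  differentiable c u -> differentiable G (c u) -> derivable (G \o c) u w.
Proof. by move=> dc dG; apply/diff_derivable/differentiable_comp. Qed.
End Chain.

Section Line.
Context {R : realType}.
Context {E : normedModType R}.

Lemma line_diff (v y : E) (t : R) : differentiable (fun t : R => t *: v + y) t.
Proof. by apply: differentiableD. Qed.

Lemma line_D (v y : E) (t : R) : 'D_1 (fun t : R => t *: v + y) t = v.
Proof.
rewrite deriveE; last exact: line_diff.
rewrite diffD // /= diff_val (diff_cst y t) scale1r.
by rewrite [X in v + X](_ : _ = 0) ?addr0.
Qed.

Lemma line_is_derive (f : E -> R) (v y : E) (t : R) :
  differentiable f (t *: v + y) ->
  is_derive t 1 (fun t : R => f (t *: v + y)) ('D_v f (t *: v + y)).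
Proof.
move=> df.
have -> : (fun t : R => f (t *: v + y)) = f \o (fun t : R => t *: v + y) by [].
apply: DeriveDef; first exact/chainB/df/line_diff.
rewrite chainD ?line_D //; exact: line_diff.
Qed.


Lemma mvt2 (f : E -> R) (x v w : E) (h : R) : 0 < h ->
  (forall y, differentiable f y) -> (forall y, differentiable ('D_v f) y) ->
  exists a b, [/\ 0 <= a <= h, 0 <= b <= h &
   f (x + h *: v + h *: w) - f (x + h *: v) - f (x + h *: w) + f x
     = h ^+ 2 * 'D_w ('D_v f) (x + a *: v + b *: w)].
Proof.
move=> h0 df ddf.
pose phi t := f (t *: v + (x + h *: w)) - f (t *: v + x).
have dphi (t : R) : is_derive t 1 phi ('D_v f (t *: v + (x + h *: w)) - 'D_v f (t *: v + x)).
  by apply: is_deriveB; apply: line_is_derive.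
have [c c0h Hc] := @MVT_segment R phi _ 0 h (ltW h0) (fun t _ => dphi t)
  (derivable_within_continuous (fun t _ => (let: DeriveDef h _ := dphi t in h))).
pose psi r := 'D_v f (r *: w + (c *: v + x)).
have dpsi (r : R) : is_derive r 1 psi ('D_w ('D_v f) (r *: w + (c *: v + x))).
  by apply: line_is_derive.
have [b b0h Hb] := @MVT_segment R psi _ 0 h (ltW h0) (fun t _ => dpsi t)
  (derivable_within_continuous (fun t _ => (let: DeriveDef h _ := dpsi t in h))).
exists c, b; split.
- by move: c0h; rewrite in_itv.
- by move: b0h; rewrite in_itv.
have E1 : c *: v + (x + h *: w) = h *: w + (c *: v + x) by rewrite [x + _]addrC addrCA.
move: Hb; rewrite /psi scale0r add0r subr0 => Hb.
move: Hc; rewrite /phi !scale0r !add0r subr0 E1 Hb.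
have -> : h *: v + (x + h *: w) = x + h *: v + h *: w by rewrite addrCA addrA.
have -> : h *: v + x = x + h *: v by rewrite addrC.
have -> : b *: w + (c *: v + x) = x + c *: v + b *: w by rewrite addrC [c *: v + x]addrC.
move=> HH.
transitivity (f (x + h *: v + h *: w) - f (x + h *: v) - (f (x + h *: w) - f x)); first ring.
by rewrite HH expr2; ring.
Qed.

Lemma schwarz (f : E -> R) (x v w : E) :
  (forall y, differentiable f y) -> (forall y, differentiable ('D_v f) y) ->
  (forall y, differentiable ('D_w f) y) ->
  {for x, continuous ('D_w ('D_v f))} -> {for x, continuous ('D_v ('D_w f))} ->
  'D_v ('D_w f) x = 'D_w ('D_v f) x.
Proof.
move=> df dvf dwf c1 c2.
set P := 'D_v ('D_w f) x; set Q := 'D_w ('D_v f) x.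
apply/eqP; rewrite -subr_eq0 -normr_eq0; apply/negPn/negP => hne.
have d0 : 0 < `|P - Q| by rewrite normr_gt0 -normr_eq0.
set e := `|P - Q| / 3.
have e0 : 0 < e by rewrite divr_gt0.
have [r1 r1p H1] := (nbhs_ballP _ _).1 (cvgr_dist_lt _ _ c1 _ e0).
have [r2 r2p H2] := (nbhs_ballP _ _).1 (cvgr_dist_lt _ _ c2 _ e0).
set m := Num.min r1 r2.
have m0 : 0 < m by rewrite lt_min r1p r2p.
set N := `|v| + `|w| + 1.
have N0 : 0 < N by rewrite /N ltr_wpDl // addr_ge0.
set h := m / N.
have h0 : 0 < h by rewrite divr_gt0.
have hN : h * (`|v| + `|w|) < m.
  rewrite /h mulrC mulrA ltr_pdivrMr // mulrC ltr_pM2l // /N ltrDl //.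
have close a b : 0 <= a <= h -> 0 <= b <= h -> `|x - (x + a *: v + b *: w)| < m.
  move=> /andP[a0 ah] /andP[b0 bh].
  rewrite -addrA opprD addrA subrr sub0r normrN.
  apply: (le_lt_trans (ler_normD _ _)); rewrite !normrZ !ger0_norm //.
  apply: le_lt_trans hN; rewrite mulrDr lerD // ler_wpM2r //.
have [a [b [ha hb E1]]] := mvt2 f x v w h h0 df dvf.
have [a' [b' [ha' hb' E2]]] := mvt2 f x w v h h0 df dwf.
have mr1 : m <= r1 by rewrite ge_min lexx.
have mr2 : m <= r2 by rewrite ge_min lexx orbT.
have toball r y : `|x - y| < r -> ball x r y by rewrite -ball_normE.
have C1 := H1 _ (toball _ _ (lt_le_trans (close _ _ ha hb) mr1)).
have := close _ _ hb' ha'; rewrite -addrA [_ *: v + _]addrC addrA => C2'.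
have C2 := H2 _ (toball _ _ (lt_le_trans C2' mr2)).
move: C1 C2 => /= C1 C2.
have hh : h ^+ 2 != 0 by rewrite expf_neq0 // gt_eqF.
have EQ : 'D_w ('D_v f) (x + a *: v + b *: w) = 'D_v ('D_w f) (x + a' *: w + b' *: v).
  apply: (mulfI hh); rewrite -E1 -E2 (addrAC x (h *: w)).
  by congr (_ + _); rewrite (addrAC (f _)).
rewrite EQ in C1.
have : `|P - Q| < e + e.
  rewrite -/P -/Q in C1 C2.
  have -> : P - Q = (P - 'D_v ('D_w f) (x + a' *: w + b' *: v)) - (Q - 'D_v ('D_w f) (x + a' *: w + b' *: v)) by rewrite opprB addrA subrK.
  set X := 'D_v ('D_w f) (x + a' *: w + b' *: v) in C1 C2 *.
  apply: (le_lt_trans (ler_normB (P - X) (Q - X))).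
  exact: (ltrD C2 C1).
rewrite /e; move: d0; clearbody P Q; move: (`|P - Q|) => d d0.
move=> hlt; clear -d0 hlt; lra.
Qed.
End Line.

Section Ham.
Context {R : realType}.
Notation V := ('rV[R]_3).

Definition Gd (H : V -> R) (j : 'I_3) := 'D_(ee j) H.
Definition Mv (H : V -> R) (s v : V) : V := \row_j 'D_v (Gd H j) s.

Lemma smooth0 (H : V -> R) (x : V) : smooth H -> differentiable H x.
Proof. by move=> sH; exact: (sH [::] x). Qed.
Lemma smooth1 (H : V -> R) (u x : V) : smooth H -> differentiable ('D_u H) x.
Proof. by move=> sH; exact: (sH [:: u] x). Qed.
Lemma smooth2 (H : V -> R) (u w x : V) : smooth H -> differentiable ('D_u ('D_w H)) x.
Proof. by move=> sH; exact: (sH [:: u; w] x). Qed.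

Lemma hamX_D (H : V -> R) (s v : V) : smooth H ->
  'D_v (hamX H) s = cross (Mv H s v) s + cross (grad H s) v.
Proof.
move=> sH.
have hx (i : 'I_1) (j : 'I_3) : (fun x => hamX H x i j) = fun x =>
   'D_(ee (ordS j)) H x * x 0 (ordS (ordS j)) - 'D_(ee (ordS (ordS j))) H x * x 0 (ordS j).
  by apply/funext => x; rewrite /hamX /cross /grad !mxE.
have db : derivable (hamX H) s v.
  apply/derivable_mxP => i j; rewrite hx.
  by apply: dbB; apply: dbM; [exact/diff_derivable/smooth1 | exact: bcoord | exact/diff_derivable/smooth1 | exact: bcoord].
rewrite derive_mx //; apply/matrixP => i j; rewrite !mxE hx.
have d1 k : derivable ('D_(ee k) H) s v by exact/diff_derivable/smooth1.
have c k : derivable (fun y : V => y 0 k) s v := bcoord k s v.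
have m1 k l : derivable (fun x => 'D_(ee k) H x * x 0 l) s v := dbM (d1 k) (c l).
rewrite (dfB (m1 _ _) (m1 _ _)) (dfM (d1 _) (c _)) (dfM (d1 _) (c _)) !dcoord /Gd.
by rewrite opprD addrACA.
Qed.
End Ham.

Section Alg.
Context {R : realType}.
Notation V := ('rV[R]_3).
Implicit Types (a b c d s g v w X Y : V).

Lemma ord3_ind (P : 'I_3 -> Prop) : P 0 -> P 1 -> P 2 -> forall i, P i.
Proof.
move=> p0 p1 p2 [[|[|[|//]]] Hi].
- by have -> : Ordinal Hi = 0 by exact/val_inj.
- by have -> : Ordinal Hi = 1 by exact/val_inj.
- by have -> : Ordinal Hi = 2 by exact/val_inj.
Qed.

Ltac ex := rewrite ?dotE ?cross0 ?cross1 ?cross2 ?mxE /=.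

Lemma dotC a b : dot a b = dot b a.
Proof. rewrite !dotE; ring. Qed.
Lemma dotDl a b c : dot (a + b) c = dot a c + dot b c.
Proof. rewrite !dotE !mxE; ring. Qed.
Lemma dotDr a b c : dot a (b + c) = dot a b + dot a c.
Proof. rewrite !dotE !mxE; ring. Qed.
Lemma dotZl k a b : dot (k *: a) b = k * dot a b.
Proof. rewrite !dotE !mxE; ring. Qed.
Lemma dotZr k a b : dot a (k *: b) = k * dot a b.
Proof. rewrite !dotE !mxE; ring. Qed.
Lemma dot0l a : dot 0 a = 0.
Proof. rewrite !dotE !mxE; ring. Qed.
Lemma dot0r a : dot a 0 = 0.
Proof. rewrite !dotE !mxE; ring. Qed.
Lemma dot_cross_l a b : dot a (cross a b) = 0.
Proof. rewrite !dotE cross0 cross1 cross2; ring. Qed.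
Lemma dot_cross_r a b : dot b (cross a b) = 0.
Proof. rewrite !dotE cross0 cross1 cross2; ring. Qed.
Lemma lagrange a b c d : dot (cross a b) (cross c d) = dot a c * dot b d - dot a d * dot b c.
Proof. rewrite !dotE !cross0 !cross1 !cross2; ring. Qed.
Lemma dot_tproj s X Y : dot (tproj s X) Y = dot X Y - dot X s * dot s Y.
Proof. rewrite /tproj !dotE !mxE; ring. Qed.

Lemma alg1 s g (M : V -> V) lam mu : dot s s = 1 ->
  (forall v, tangent s v -> tproj s (cross (M v) s + cross g v) = lam *: v + mu *: cross s v) ->
  forall v, tangent s v -> dot v (M v) = (dot g s - mu) * dot v v.
Proof.
move=> hs hM v hv; have := congr1 (fun X => dot X (cross s v)) (hM v hv).
rewrite /= dot_tproj !dotDl !dotZl dot_cross_l dot_cross_r !lagrange.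
have hv' : dot v s = 0 by rewrite dotC.
rewrite /tangent in hv; rewrite hs hv hv' (dotC v (M v)).
move: (dot (M v) v) (dot g s) (dot v v) (dot g v) => A B C D.
move=> HH; lra.
Qed.

Lemma polar s (M : V -> V) kap :
  (forall v w, M (v + w) = M v + M w) -> (forall v w, dot w (M v) = dot v (M w)) ->
  (forall v, tangent s v -> dot v (M v) = kap * dot v v) ->
  forall v w, tangent s v -> tangent s w -> dot w (M v) = kap * dot v w.
Proof.
move=> hadd hsym hq v w hv hw.
have hvw : tangent s (v + w) by rewrite /tangent dotDr hv hw addr0.
have := hq _ hvw; rewrite hadd !dotDl !dotDr hq // hq // (hsym w v) (dotC w v).
move: (dot w (M v)) (dot v w) (dot v (M v)) (dot w (M w)) (dot v v) (dot w w) => A B C D E F.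
move=> HH; lra.
Qed.

Lemma alg2 s g (M : V -> V) kap : dot s s = 1 ->
  (forall v w, tangent s v -> tangent s w -> dot w (M v) = kap * dot v w) ->
  forall v, tangent s v ->
    tproj s (cross (M v) s + cross g v) = 0 *: v + (dot g s - kap) *: cross s v.
Proof.
move=> hs hM v hv.
have tc i : tangent s (cross s (ee i)) by rewrite /tangent dot_cross_l.
have F i := hM v _ hv (tc i).
have hv' : dot v s = 0 by rewrite dotC.
rewrite /tangent in hv.
move: (M v) F => m F.
have key i : (tproj s (cross m s + cross g v)) 0 i - (0 *: v + (dot g s - kap) *: cross s v) 0 i =
   (dot (cross s (ee i)) m - kap * dot v (cross s (ee i))) - dot v s * (cross s g) 0 i
   + (1 - dot s s) * (cross g v) 0 i.
  move: i; apply: ord3_ind;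
  rewrite /tproj /ee !mxE !dotE !mxE ?oS0 ?oS1 ?oS2 /= ?mxE /= ?oS0 ?oS1 ?oS2; ring.
apply: vec3P; apply/eqP; rewrite -subr_eq0 key F hs hv'; apply/eqP; ring.
Qed.

Lemma final_alg s g (M : V -> V) (Hs : R) : dot s s = 1 ->
  (forall v w, M (v + w) = M v + M w) -> (forall v w, dot w (M v) = dot v (M w)) ->
  ((exists lam mu : R, forall v, tangent s v ->
      tproj s (cross (M v) s + cross g v) = lam *: v + mu *: cross s v) <->
   exists a b c d : R, [/\ Hs = d + a * s 0 0 + b * s 0 1 + c * s 0 2,
     forall v, tangent s v -> dot g v = a * v 0 0 + b * v 0 1 + c * v 0 2 &
     forall v w, tangent s v -> tangent s w ->
       dot w (M v) - dot v w * dot g s = 0 - dot v w * (a * s 0 0 + b * s 0 1 + c * s 0 2)]).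
Proof.
move=> hs hadd hsym; split.
- case=> lam [mu H1].
  have quad := alg1 s g M lam mu hs H1.
  have pol := polar s M _ hadd hsym quad.
  set kap := dot g s - mu in pol.
  have hsE : s 0 0 * s 0 0 + s 0 1 * s 0 1 + s 0 2 * s 0 2 = 1 by rewrite -dotE.
  exists (g 0 0 - kap * s 0 0), (g 0 1 - kap * s 0 1), (g 0 2 - kap * s 0 2), (Hs - dot g s + kap).
  split.
  + apply/eqP; rewrite -subr_eq0; apply/eqP.
    transitivity (kap * (s 0 0 * s 0 0 + s 0 1 * s 0 1 + s 0 2 * s 0 2 - 1)).
      by rewrite !dotE; ring.
    by rewrite hsE subrr mulr0.
  + move=> v hv; apply/eqP; rewrite -subr_eq0; apply/eqP.
    transitivity (kap * dot s v); first by rewrite !dotE; ring.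
    by rewrite hv mulr0.
  + move=> v w hv hw; rewrite pol //.
    apply/eqP; rewrite -subr_eq0; apply/eqP.
    transitivity (dot v w * kap * (1 - (s 0 0 * s 0 0 + s 0 1 * s 0 1 + s 0 2 * s 0 2))).
      by rewrite !dotE; ring.
    by rewrite hsE subrr mulr0.
- case=> a [b [c [d [_ _ h2]]]].
  set kap := dot g s - (a * s 0 0 + b * s 0 1 + c * s 0 2).
  have hq : forall v w, tangent s v -> tangent s w -> dot w (M v) = kap * dot v w.
    move=> v w hv hw; have := h2 v w hv hw; rewrite /kap.
    move: (dot w (M v)) (dot v w) (dot g s) (a * s 0 0 + b * s 0 1 + c * s 0 2) => A B C D.
    move=> HH; apply/eqP; rewrite -subr_eq0; apply/eqP.
    transitivity (A - B * C - (0 - B * D)); first by ring.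
    by rewrite HH subrr.
  exists 0, (dot g s - kap); exact: (alg2 s g M kap hs hq).
Qed.
End Alg.

Section Gen.
Context {R : realType}.
Notation V := ('rV[R]_3).

Lemma diff_rV (f : V -> V) x : (forall i, differentiable (fun u => f u 0 i) x) -> differentiable f x.
Proof.
move=> hf.
have -> : f = (fun u => f u 0 0 *: ee 0 + f u 0 1 *: ee 1 + f u 0 2 *: ee 2).
  by apply/funext => u; rewrite -decomp.
apply: differentiableD; first apply: differentiableD.
all: exact: differentiableZl.
Qed.

Lemma Ddir (f : R -> R) (y a : R) : differentiable f y -> 'D_a f y = a * 'D_1 f y.
Proof.
move=> df; rewrite !deriveE //.
have -> : a = a *: (1 : R) by rewrite /GRing.scale /= mulr1.
by rewrite linearZ /= /GRing.scale /= mulr1.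
Qed.

Lemma gen2 (G : V -> R) (c : V -> V) (x v w : V) :
  (forall y, differentiable G y) ->
  (forall j y, differentiable ('D_(ee j) G) y) ->
  (\forall u \near x, differentiable c u) ->
  (forall j, derivable (fun u => 'D_w c u 0 j) x v) ->
  'D_v ('D_w (G \o c)) x =
    ('D_v (fun u => 'D_w c u 0 0) x * 'D_(ee 0) G (c x)
       + 'D_w c x 0 0 * 'D_('D_v c x) ('D_(ee 0) G) (c x))
  + ('D_v (fun u => 'D_w c u 0 1) x * 'D_(ee 1) G (c x)
       + 'D_w c x 0 1 * 'D_('D_v c x) ('D_(ee 1) G) (c x))
  + ('D_v (fun u => 'D_w c u 0 2) x * 'D_(ee 2) G (c x)
       + 'D_w c x 0 2 * 'D_('D_v c x) ('D_(ee 2) G) (c x)).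
Proof.
move=> dG dGj Hc dDc.
have dcx : differentiable c x by exact: (nbhs_singleton Hc).
have E : \forall u \near x, 'D_w (G \o c) u =
   'D_w c u 0 0 * 'D_(ee 0) G (c u) + 'D_w c u 0 1 * 'D_(ee 1) G (c u)
   + 'D_w c u 0 2 * 'D_(ee 2) G (c u).
  by apply: filterS Hc => u du; rewrite chainD // Dlin.
rewrite (near_eq_derive v E).
have bGc j : derivable (fun u => 'D_(ee j) G (c u)) x v.
  have -> : (fun u => 'D_(ee j) G (c u)) = 'D_(ee j) G \o c by [].
  exact: chainB.
have eGc j : 'D_v (fun u => 'D_(ee j) G (c u)) x = 'D_('D_v c x) ('D_(ee j) G) (c x).
  have -> : (fun u => 'D_(ee j) G (c u)) = 'D_(ee j) G \o c by [].
  exact: chainD.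
have bP j : derivable (fun u => 'D_w c u 0 j * 'D_(ee j) G (c u)) x v.
  exact: dbM.
rewrite (dfD (dbD (bP 0) (bP 1)) (bP 2)) (dfD (bP 0) (bP 1)).
rewrite (dfM (dDc 0) (bGc 0)) (dfM (dDc 1) (bGc 1)) (dfM (dDc 2) (bGc 2)).
by rewrite (eGc 0) (eGc 1) (eGc 2).
Qed.
End Gen.

Section Chart.
Context {R : realType}.
Notation V := ('rV[R]_3).
Variable s : V.
Hypothesis hs : dot s s = 1.

Lemma d2b (f : V -> R) x v : differentiable f x -> derivable f x v.
Proof. exact: diff_derivable. Qed.

Definition pf (i : 'I_3) := fun u : V => s 0 i + u 0 i.
Definition qq := fun u : V => pf 0 u * pf 0 u + pf 1 u * pf 1 u + pf 2 u * pf 2 u.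
Definition rho := fun u : V => (Num.sqrt (qq u))^-1.

Lemma qE u : dot (s + u) (s + u) = qq u.
Proof. by rewrite dotE !mxE. Qed.
Lemma chart_cmp u i : chart s u 0 i = rho u * pf i u.
Proof. by rewrite /chart /normalize qE !mxE. Qed.

Lemma dpf i u : differentiable (pf i) u.
Proof. apply: differentiableD => //; exact: diffcoord. Qed.
Lemma bpf i u w : derivable (pf i) u w.
Proof. exact/diff_derivable/dpf. Qed.
Lemma Dpf i u w : 'D_w (pf i) u = w 0 i.
Proof. by rewrite /pf (dfD (dbC _ _ _) (bcoord _ _ _)) dfC dcoord add0r. Qed.

Lemma dqq u : differentiable qq u.
Proof.
by apply: differentiableD; [apply: differentiableD|]; apply: differentiableM; exact: dpf.
Qed.

Definition LL (w u : V) := pf 0 u * w 0 0 + pf 1 u * w 0 1 + pf 2 u * w 0 2.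

Lemma Dqq u w : 'D_w qq u = 2 * LL w u.
Proof.
have bm i : derivable (fun u => pf i u * pf i u) u w by apply: dbM; exact: bpf.
rewrite /qq (dfD (dbD (bm 0) (bm 1)) (bm 2)) (dfD (bm 0) (bm 1)).
rewrite !(dfM (bpf _ _ _) (bpf _ _ _)) !Dpf /LL.
move: (pf 0 u) (pf 1 u) (pf 2 u) => a b c; ring.
Qed.

Lemma dsqrt (y : R) : 0 < y -> differentiable (@Num.sqrt R) y.
Proof. by move=> y0; apply/derivable1_diffP; case: (is_derive1_sqrt y0). Qed.

Lemma dsq u : 0 < qq u -> differentiable (fun u => Num.sqrt (qq u)) u.
Proof.
move=> q0; have -> : (fun u => Num.sqrt (qq u)) = Num.sqrt \o qq by [].
apply: differentiable_comp; [exact: dqq | exact: dsqrt].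
Qed.

Lemma Dsq u w : 0 < qq u -> 'D_w (fun u => Num.sqrt (qq u)) u = LL w u / Num.sqrt (qq u).
Proof.
move=> q0; have -> : (fun u => Num.sqrt (qq u)) = Num.sqrt \o qq by [].
rewrite chainD; [|exact: dqq|exact: dsqrt].
rewrite Ddir; last exact: dsqrt.
rewrite derive_sqrt // Dqq.
have sq0 : Num.sqrt (qq u) != 0 by rewrite gt_eqF // sqrtr_gt0.
move: (Num.sqrt (qq u)) sq0 (LL w u) => r r0 l.
by field.
Qed.

Lemma drho u : 0 < qq u -> differentiable rho u.
Proof.
move=> q0; apply: differentiableV; first exact: dsq.
by rewrite gt_eqF // sqrtr_gt0.
Qed.

Lemma Drho u w : 0 < qq u -> 'D_w rho u = - LL w u * (rho u * (rho u * rho u)).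
Proof.
move=> q0; rewrite /rho deriveV; last exact/diff_derivable/dsq.
  2: by rewrite gt_eqF // sqrtr_gt0.
rewrite Dsq //.
have sq0 : Num.sqrt (qq u) != 0 by rewrite gt_eqF // sqrtr_gt0.
move: (Num.sqrt (qq u)) sq0 (LL w u) => r r0 l.
rewrite /GRing.scale /=.
by field.
Qed.

Lemma dchart u : 0 < qq u -> differentiable (chart s) u.
Proof.
move=> q0; apply: diff_rV => i.
have -> : (fun u => chart s u 0 i) = (fun u => rho u * pf i u).
  by apply/funext => y; rewrite chart_cmp.
apply: differentiableM; [exact: drho | exact: dpf].
Qed.

Lemma Dchart u w j : 0 < qq u -> 'D_w (chart s) u 0 j = 'D_w rho u * pf j u + rho u * w 0 j.
Proof.
move=> q0; rewrite derive_mx; last exact/diff_derivable/dchart.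
rewrite mxE.
have -> : (fun u => chart s u 0 j) = (fun u => rho u * pf j u).
  by apply/funext => y; rewrite chart_cmp.
rewrite (dfM (d2b _ _ w (drho _ q0)) (bpf _ _ _)) Dpf //.
Qed.

Definition Dc (w : V) (j : 'I_3) := fun u : V =>
  rho u * w 0 j - LL w u * (rho u * (rho u * rho u)) * pf j u.

Lemma DchartE u w j : 0 < qq u -> 'D_w (chart s) u 0 j = Dc w j u.
Proof.
move=> q0; rewrite Dchart // Drho // /Dc.
move: (LL w u) (rho u) (pf j u) (w 0 j) => a b c d; ring.
Qed.

Lemma qq0 : qq 0 = 1.
Proof. by rewrite -qE addr0 hs. Qed.
Lemma rho0 : rho 0 = 1.
Proof. by rewrite /rho qq0 sqrtr1 invr1. Qed.
Lemma pf0 i : pf i 0 = s 0 i.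
Proof. by rewrite /pf mxE addr0. Qed.
Lemma LL0 w : LL w 0 = dot s w.
Proof. by rewrite /LL !pf0 dotE. Qed.
Lemma qq0_gt0 : 0 < qq 0.
Proof. by rewrite qq0 ltr01. Qed.

Lemma Hq : \forall u \near (0 : V), 0 < qq u.
Proof.
have cq : {for 0, continuous qq} := differentiable_continuous (dqq 0).
exact: (cvgr_gt (qq 0) cq 0 qq0_gt0).
Qed.

Lemma chart0 : chart s 0 = s.
Proof. by rewrite /chart /normalize addr0 hs sqrtr1 invr1 scale1r. Qed.

Lemma Dchart0 v : tangent s v -> 'D_v (chart s) 0 = v.
Proof.
move=> hv; apply: vec3P; rewrite Dchart ?qq0_gt0 // Drho ?qq0_gt0 // LL0 hv rho0;
  ring.
Qed.

Lemma bLL u v w : derivable (LL w) u v.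
Proof.
rewrite /LL; apply: dbD; first apply: dbD.
all: apply: dbM; [exact: bpf | exact: dbC].
Qed.

Lemma DLL u v w : 'D_v (LL w) u = dot v w.
Proof.
have bm i : derivable (fun u => pf i u * w 0 i) u v by apply: dbM; [exact: bpf|exact: dbC].
rewrite /LL (dfD (dbD (bm 0) (bm 1)) (bm 2)) (dfD (bm 0) (bm 1)).
rewrite !(dfM (bpf _ _ _) (dbC _ _ _)) !Dpf !dfC dotE.
move: (pf 0 u) (pf 1 u) (pf 2 u) => a b c; ring.
Qed.

Lemma bDc v w j : derivable (Dc w j) 0 v.
Proof.
have br : derivable rho 0 v by apply: d2b; apply: drho; exact: qq0_gt0.
exact: (dbB (dbM br (dbC (w 0 j) _ _)) (dbM (dbM (bLL _ _ _) (dbM br (dbM br br))) (bpf j _ _))).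
Qed.

Lemma DDc v w j : tangent s v -> tangent s w -> 'D_v (Dc w j) 0 = - (dot v w * s 0 j).
Proof.
move=> hv hw.
have br : derivable rho 0 v by apply: d2b; apply: drho; exact: qq0_gt0.
have b2 : derivable (fun u => rho u * rho u) 0 v := dbM br br.
have b3 : derivable (fun u => rho u * (rho u * rho u)) 0 v := dbM br b2.
have bL3 : derivable (fun u => LL w u * (rho u * (rho u * rho u))) 0 v := dbM (bLL 0 v w) b3.
rewrite /Dc (dfB (dbM br (dbC (w 0 j) _ _)) (dbM bL3 (bpf j _ _))).
rewrite (dfM br (dbC (w 0 j) _ _)) (dfM bL3 (bpf j _ _)) (dfM (bLL _ _ _) b3) (dfM br b2) (dfM br br).
rewrite dfC Dpf DLL Drho ?qq0_gt0 // rho0 !LL0 hv hw pf0.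
move: (dot v w) (s 0 j) (v 0 j) (w 0 j) => a b c d; ring.
Qed.
End Chart.

Section Jet.
Context {R : realType}.
Notation V := ('rV[R]_3).

Lemma gradE (G : V -> R) x j : grad G x 0 j = 'D_(ee j) G x.
Proof. by rewrite mxE. Qed.
Lemma MvE (G : V -> R) s v j : Mv G s v 0 j = 'D_v ('D_(ee j) G) s.
Proof. by rewrite mxE. Qed.

Lemma jet_formula (s : V) (G : V -> R) (v w : V) : dot s s = 1 ->
  (forall y, differentiable G y) -> (forall j y, differentiable ('D_(ee j) G) y) ->
  tangent s v -> tangent s w ->
  [/\ (G \o chart s) 0 = G s,
     'D_v (G \o chart s) 0 = dot (grad G s) v &
     'D_v ('D_w (G \o chart s)) 0 = dot w (Mv G s v) - dot v w * dot (grad G s) s].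
Proof.
move=> hs dG dGj hv hw.
have dc0 : differentiable (chart s) 0 := dchart s 0 (qq0_gt0 s hs).
split.
- by rewrite /= (chart0 s hs).
- rewrite chainD // (chart0 s hs) (Dchart0 s hs v hv) Dlin // dotE !gradE.
  move: ('D_(ee 0) G s) ('D_(ee 1) G s) ('D_(ee 2) G s) => a b c; ring.
have Hc : \forall u \near (0 : V), differentiable (chart s) u.
  by apply: filterS (Hq s hs) => u qu; exact: dchart.
have nE j : \forall u \near (0 : V), 'D_w (chart s) u 0 j = Dc s w j u.
  by apply: filterS (Hq s hs) => u qu; exact: DchartE.
have dDc j : derivable (fun u => 'D_w (chart s) u 0 j) 0 v.
  apply: (near_eq_derivable _ (bDc s hs v w j)).
  by apply: filterS (nE j) => u ->.
rewrite (gen2 G (chart s) 0 v w dG dGj Hc dDc) (chart0 s hs) (Dchart0 s hs v hv) (Dchart0 s hs w hw).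
rewrite !(near_eq_derive v (nE _)) !(DDc s hs v w _ hv hw).
rewrite !dotE !gradE !MvE.
move: ('D_(ee 0) G s) ('D_(ee 1) G s) ('D_(ee 2) G s) => a b c.
move: ('D_v ('D_(ee 0) G) s) ('D_v ('D_(ee 1) G) s) ('D_v ('D_(ee 2) G) s) => a' b' c'.
ring.
Qed.
End Jet.

Section Final.
Context {R : realType}.
Notation V := ('rV[R]_3).

Lemma addmx_cmp (A B : V) j : (A + B) 0 j = A 0 j + B 0 j.
Proof. by rewrite mxE. Qed.

Lemma Madd (H : V -> R) (s v w : V) : smooth H -> Mv H s (v + w) = Mv H s v + Mv H s w.
Proof.
move=> sH; apply/rowP => j.
apply: (etrans (MvE H s (v + w) j)).
apply: (etrans (Dadd _ _ v w (smooth1 H (ee j) s sH))).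
apply: esym; apply: (etrans (addmx_cmp _ _ j)).
by congr (_ + _); apply: MvE.
Qed.

Lemma Dww (H : V -> R) s v w : smooth H -> dot w (Mv H s v) = 'D_v ('D_w H) s.
Proof.
move=> sH.
have -> : 'D_w H = fun y => w 0 0 * 'D_(ee 0) H y + w 0 1 * 'D_(ee 1) H y + w 0 2 * 'D_(ee 2) H y.
  by apply/funext => y; rewrite Dlin //; exact: smooth0.
have bj j : derivable ('D_(ee j) H) s v by apply: diff_derivable; exact: smooth1.
have bm j : derivable (fun y => w 0 j * 'D_(ee j) H y) s v := dbM (dbC (w 0 j) s v) (bj j).
rewrite (dfD (dbD (bm 0) (bm 1)) (bm 2)) (dfD (bm 0) (bm 1)).
rewrite (dfM (dbC (w 0 0) s v) (bj 0)) (dfM (dbC (w 0 1) s v) (bj 1)) (dfM (dbC (w 0 2) s v) (bj 2)) !dfC.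
rewrite dotE !MvE /Gd.
move: ('D_v ('D_(ee 0) H) s) ('D_v ('D_(ee 1) H) s) ('D_v ('D_(ee 2) H) s) => x y z.
move: ('D_(ee 0) H s) ('D_(ee 1) H s) ('D_(ee 2) H s) => x' y' z'.
ring.
Qed.

Lemma Msym (H : V -> R) s v w : smooth H -> dot w (Mv H s v) = dot v (Mv H s w).
Proof.
move=> sH; apply: (etrans (Dww H s v w sH)); apply: esym.
apply: (etrans (Dww H s w v sH)); apply: esym.
exact: (schwarz H s v w (fun y => smooth0 H y sH) (fun y => smooth1 H v y sH)
  (fun y => smooth1 H w y sH) (differentiable_continuous (smooth2 H w v s sH))
  (differentiable_continuous (smooth2 H v w s sH))).
Qed.

Lemma DA (a b c d : R) (u x : V) : 'D_u (affine3 a b c d) x = a * u 0 0 + b * u 0 1 + c * u 0 2.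
Proof.
have m i k : derivable (fun p : V => k * p 0 i) x u := dbM (dbC k x u) (bcoord i x u).
rewrite /affine3.
rewrite (dfD (dbD (dbD (dbC d x u) (m 0 a)) (m 1 b)) (m 2 c)).
rewrite (dfD (dbD (dbC d x u) (m 0 a)) (m 1 b)).
rewrite (dfD (dbC d x u) (m 0 a)).
rewrite (dfM (dbC a x u) (bcoord 0 x u)) (dfM (dbC b x u) (bcoord 1 x u)) (dfM (dbC c x u) (bcoord 2 x u)).
rewrite (dfC d) (dfC a) (dfC b) (dfC c) !dcoord.
ring.
Qed.

Lemma dA (a b c d : R) (x : V) : differentiable (affine3 a b c d) x.
Proof.
rewrite /affine3.
apply: differentiableD; [apply: differentiableD; [apply: differentiableD|]|].
- exact: differentiable_cst.
all: apply: differentiableM; [exact: differentiable_cst | exact: diffcoord].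
Qed.

Lemma DAj (a b c d : R) j : 'D_(ee j) (affine3 a b c d) =
  fun _ => a * ee j 0 0 + b * ee j 0 1 + c * ee j 0 2.
Proof. by apply/funext => x; rewrite DA. Qed.

Lemma dAj (a b c d : R) j (y : V) : differentiable ('D_(ee j) (affine3 a b c d)) y.
Proof. rewrite DAj; exact: differentiable_cst. Qed.

Lemma MvA (a b c d : R) (s v : V) : Mv (affine3 a b c d) s v = 0.
Proof.
apply/rowP => j; apply: (etrans (MvE _ s v j)); rewrite DAj dfC.
by rewrite mxE.
Qed.

Lemma dot_gradA (a b c d : R) (s u : V) :
  dot (grad (affine3 a b c d) s) u = a * u 0 0 + b * u 0 1 + c * u 0 2.
Proof.
have g j : grad (affine3 a b c d) s 0 j = a * ee j 0 0 + b * ee j 0 1 + c * ee j 0 2.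
  exact: (etrans (gradE _ s j) (DA a b c d (ee j) s)).
rewrite dotE; move: (g 0) (g 1) (g 2); move: (grad (affine3 a b c d) s) => G -> -> ->.
rewrite !eeE /=; ring.
Qed.
End Final.

Theorem lemma5 (R : realType) (H : 'rV[R]_3 -> R) (s : 'rV[R]_3) :
  smooth H -> on_sphere s ->
  (conformal_point H s <->
   exists a b c d : R, jet2_eq s H (affine3 a b c d)).
Proof.
move=> sH hs; rewrite /on_sphere in hs.
have dG y : differentiable H y := smooth0 H y sH.
have dGj j y : differentiable ('D_(ee j) H) y := smooth1 H (ee j) y sH.
have t0 : tangent s 0 by rewrite /tangent dot0r.
have FA := final_alg s (grad H s) (Mv H s) (H s) hs
  (fun v w => Madd H s v w sH) (fun v w => Msym H s v w sH).
have covE v : covD H s v = tproj s (cross (Mv H s v) s + cross (grad H s) v).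
  by rewrite /covD hamX_D.
have [eH0 _ _] := jet_formula s H 0 0 hs dG dGj t0 t0.
split.
- case=> lam [mu Hc].
  have [a [b [c [d [h0 h1 h2]]]]] := FA.1 (ex_intro _ lam (ex_intro _ mu
     (fun v hv => etrans (esym (covE v)) (Hc v hv)))).
  exists a, b, c, d; rewrite /jet2_eq.
  have [eA0 _ _] := jet_formula s (affine3 a b c d) 0 0 hs (dA a b c d) (dAj a b c d) t0 t0.
  split; [|split].
  + apply: (etrans eH0); apply: (etrans h0); apply: esym; apply: (etrans eA0); by [].
  + move=> v hv.
    have [_ eH1 _] := jet_formula s H v v hs dG dGj hv hv.
    have [_ eA1 _] := jet_formula s (affine3 a b c d) v v hs (dA a b c d) (dAj a b c d) hv hv.
    apply: (etrans eH1); apply: (etrans (h1 v hv)); apply: esym; apply: (etrans eA1).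
    exact: dot_gradA.
  + move=> v w hv hw.
    have [_ _ eH2] := jet_formula s H v w hs dG dGj hv hw.
    have [_ _ eA2] := jet_formula s (affine3 a b c d) v w hs (dA a b c d) (dAj a b c d) hv hw.
    apply: (etrans eH2); apply: (etrans (h2 v w hv hw)); apply: esym; apply: (etrans eA2).
    by rewrite MvA dot0r dot_gradA.
- case=> a [b [c [d [j0 [j1 j2]]]]].
  have [eA0 _ _] := jet_formula s (affine3 a b c d) 0 0 hs (dA a b c d) (dAj a b c d) t0 t0.
  have h0 : H s = d + a * s 0 0 + b * s 0 1 + c * s 0 2 := etrans (esym eH0) (etrans j0 eA0).
  have h1 v : tangent s v -> dot (grad H s) v = a * v 0 0 + b * v 0 1 + c * v 0 2.
    move=> hv.
    have [_ eH1 _] := jet_formula s H v v hs dG dGj hv hv.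
    have [_ eA1 _] := jet_formula s (affine3 a b c d) v v hs (dA a b c d) (dAj a b c d) hv hv.
    exact: (etrans (esym eH1) (etrans (j1 v hv) (etrans eA1 (dot_gradA a b c d s v)))).
  have h2 v w : tangent s v -> tangent s w ->
      dot w (Mv H s v) - dot v w * dot (grad H s) s
      = 0 - dot v w * (a * s 0 0 + b * s 0 1 + c * s 0 2).
    move=> hv hw.
    have [_ _ eH2] := jet_formula s H v w hs dG dGj hv hw.
    have [_ _ eA2] := jet_formula s (affine3 a b c d) v w hs (dA a b c d) (dAj a b c d) hv hw.
    apply: (etrans (esym eH2)); apply: (etrans (j2 v w hv hw)); apply: (etrans eA2).
    by rewrite MvA dot0r dot_gradA.
  have [lam [mu Hc]] := FA.2 (ex_intro _ a (ex_intro _ b (ex_intro _ c (ex_intro _ d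
     (And3 h0 h1 h2))))).
  exists lam, mu => v hv.
  exact: (etrans (covE v) (Hc v hv)).
Qed.
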